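(* Let $P$ be a finite poset with height function $h$. Then $\mathsf{Z}_{P,h}([1]_q)=\chi_P$, where $\chi_P=\sum_{k\ge1}(-1)^{k-1}\#\operatorname{Ch}_k(P)$ is the Euler characteristic of the order complex of $P$. In particular, if $P$ has a unique minimum or a unique maximum, then $\mathsf{Z}_{P,h}([1]_q)=1$.
   Context: $q$ is an indeterminate; $[n]_q=(q^n-1)/(q-1)$ (so $[1]_q=1$). A height function is $h:P\to\mathbb{N}$ with $h(x)<h(y)$ whenever $y$ covers $x$. $\operatorname{Ch}_k(P)$ is the set of strict chains $c_1<\cdots<c_k$ in $P$. For a tuple $a=(a_1,\dots,a_k)$ of distinct nonnegative integers, $\mathsf{E}_a\in\mathbb{Q}(q)[x]$ is the unique polynomial with $\mathsf{E}_a([n]_q)=\sum_{m\in\mathbb{N}^k,\sum m_i=n}q^{\sum a_im_i}$ for all $n\ge0$. The $q$-Zeta polynomial is $\mathsf{Z}_{P,h}(x)=\sum_{k\ge1}\sum_{c\in\operatorname{Ch}_k(P)}q^{\sum_i h(c_i)}\mathsf{E}_{(h(c_1),\dots,h(c_k))}((x-[k+1]_q)/q^{k+1})$; it is the unique polynomial with $\mathsf{Z}_{P,h}([n]_q)=\sum_{e_1\le\cdots\le e_{n-1}}q^{\sum_j h(e_j)}$ for all $n\ge2$. *)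

(* Defs.v *)
From HB Require Import structures.
From mathcomp Require Import all_boot all_order all_algebra.
From mathcomp Require Import fraction.
From Stdlib Require Import ClassicalEpsilon.
Set Implicit Arguments. Unset Strict Implicit. Unset Printing Implicit Defensive.
Import Order.TTheory GRing.Theory Num.Theory.
Local Open Scope ring_scope.

Definition Qq : fieldType := {fraction {poly rat}}.
Definition qq : Qq := tofrac 'X.

Definition qint (n : nat) : Qq := (qq ^+ n - 1) / (qq - 1).

Definition Esum (a : seq nat) (n : nat) : Qq :=
  \sum_(m : {ffun 'I_(size a) -> 'I_n.+1} | (\sum_(i < size a) (m i : nat))%N == n)
     qq ^+ (\sum_(i < size a) nth 0%N a i * m i)%N.

(* E_a : the (unique) polynomial with E_a([n]_q) = Esum a n for all n >= 0
   (chosen by Hilbert's epsilon; 0 if no such polynomial exists). *)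
Definition Epoly (a : seq nat) : {poly Qq} :=
  epsilon (inhabits 0) (fun p : {poly Qq} => forall n : nat, p.[qint n] = Esum a n).

Section Poset.
Context {d : Order.disp_t} {P : finPOrderType d}.

Definition covers (x y : P) : bool :=
  ((x < y)%O && [forall z : P, ~~ ((x < z)%O && (z < y)%O)]).

Definition is_height (h : P -> nat) : Prop :=
  forall x y : P, covers x y -> (h x < h y)%N.

Definition Ch (k : nat) : {set k.-tuple P} :=
  [set c : k.-tuple P | sorted (fun x y : P => (x < y)%O) c].

(* q-Zeta polynomial; chains have length at most #|P|, so k ranges over 1..#|P| *)
Definition Zq (h : P -> nat) : {poly Qq} :=
  \sum_(1 <= k < #|P|.+1) \sum_(c in Ch k)
     (qq ^+ (\sum_(x <- c) h x)%N)%:P *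
     (Epoly (map h c) \Po (('X - (qint k.+1)%:P) * ((qq ^+ k.+1)^-1)%:P)).

Definition chi : int :=
  \sum_(1 <= k < #|P|.+1) (-1) ^+ k.-1 * (#|Ch k|%:Z).

End Poset.

(* Main.v *)
Require Import Defs.
From HB Require Import structures.
From mathcomp Require Import all_boot all_order all_algebra.
From mathcomp Require Import fraction ring.
From Stdlib Require Import ClassicalEpsilon.
Set Implicit Arguments. Unset Strict Implicit. Unset Printing Implicit Defensive.
Import Order.TTheory GRing.Theory Num.Theory.
Local Open Scope ring_scope.



Definition EsumN (a : seq nat) (N n : nat) : Qq :=
  \sum_(m : {ffun 'I_(size a) -> 'I_N.+1} | (\sum_(i < size a) (m i : nat))%N == n)
     qq ^+ (\sum_(i < size a) nth 0%N a i * m i)%N.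

Fixpoint Fsum (a : seq nat) (n : nat) : Qq :=
  match a with
  | [::] => (n == 0%N)%:R
  | x :: a' => \sum_(j < n.+1) qq ^+ (x * j) * Fsum a' (n - j)
  end.

Lemma EsumN_F a N n : (n <= N)%N -> EsumN a N n = Fsum a n.
Proof.
elim: a n => [|x a IH] n nN.
  rewrite /EsumN /=.
  under eq_bigl => m do rewrite big_ord0.
  under eq_bigr => m _ do rewrite big_ord0 expr0.
  case: n nN => [|n] _ /=.
    by rewrite sumr_const card_ffun !card_ord expn0.
  exact: big_pred0.
rewrite /EsumN /=.
pose f (p : 'I_N.+1 * {ffun 'I_(size a) -> 'I_N.+1}) : {ffun 'I_(size a).+1 -> 'I_N.+1} :=
  [ffun i => if unlift ord0 i is Some i' then p.2 i' else p.1].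
pose g (m : {ffun 'I_(size a).+1 -> 'I_N.+1}) := (m ord0, [ffun i => m (lift ord0 i)]).
have fK : cancel f g.
  by case=> j m; rewrite /f /g /= ffunE unlift_none; congr pair; apply/ffunP=> i; rewrite !ffunE liftK.
have gK : cancel g f.
  move=> m; apply/ffunP=> i; rewrite /f /g ffunE /=.
  by case: unliftP => [i'|] ->; rewrite ?ffunE.
rewrite (reindex f); last by exists g => p _; [apply: fK|apply: gK].
have sf p : (\sum_(i < (size a).+1) (f p i : nat))%N = (p.1 + \sum_(i < size a) p.2 i)%N.
  by rewrite big_ord_recl /f ffunE unlift_none; congr addn; apply: eq_bigr => i _; rewrite ffunE liftK.
have ef p : (\sum_(i < (size a).+1) nth 0%N (x :: a) i * f p i)%N
   = (x * p.1 + \sum_(i < size a) nth 0%N a i * p.2 i)%N.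
  by rewrite big_ord_recl /f ffunE unlift_none; congr addn; apply: eq_bigr => i _; rewrite ffunE liftK.
under eq_bigl => p do rewrite sf.
under eq_bigr => p _ do rewrite ef exprD.
rewrite -(pair_big_dep xpredT (fun (j : 'I_N.+1) (m : {ffun 'I_(size a) -> 'I_N.+1}) => (j + \sum_(i < size a) (m i : nat))%N == n)
   (fun (j : 'I_N.+1) (m : {ffun 'I_(size a) -> 'I_N.+1}) => qq ^+ (x * j) * qq ^+ (\sum_(i < size a) nth 0%N a i * m i)%N)) /=.
rewrite (big_ord_widen N.+1 (fun j => qq ^+ (x * j) * Fsum a (n - j))) //.
rewrite [RHS]big_mkcond /=; apply: eq_bigr => j _.
rewrite -mulr_sumr.
case: (leqP j n) => jn.
  rewrite ltnS jn -IH; last by rewrite (leq_trans (leq_subr _ _) nN).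
  congr (_ * _); rewrite /EsumN; apply: eq_bigl => m.
  by apply/eqP/eqP => [<-|->]; [rewrite addKn|rewrite subnKC].
rewrite ltnS leqNgt jn /= big_pred0 ?mulr0 // => m.
by apply/negbTE; rewrite neq_ltn; apply/orP; right; rewrite ltn_addr.
Qed.

Lemma Esum_F a n : Esum a n = Fsum a n.
Proof. exact: EsumN_F. Qed.



Lemma qqX n : qq ^+ n = tofrac ('X^n : {poly rat}).
Proof. by rewrite /qq rmorphXn. Qed.

Lemma qqX_inj m n : qq ^+ m = qq ^+ n -> m = n.
Proof.
rewrite !qqX => /eqP; rewrite tofrac_eq => /eqP h; have := size_polyXn rat m; rewrite h size_polyXn.
by case.
Qed.

Lemma qq_neq0 : qq != 0.
Proof. by rewrite /qq tofrac_eq0 polyX_eq0. Qed.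

Lemma qqX_neq0 n : qq ^+ n != 0.
Proof. by rewrite expf_neq0 // qq_neq0. Qed.

Lemma qq1_neq0 : qq - 1 != 0.
Proof. rewrite subr_eq0; apply/eqP => h; have := @qqX_inj 1 0; rewrite expr1 expr0 => /(_ h). by []. Qed.

Lemma qint_pow n : 1 + (qq - 1) * qint n = qq ^+ n.
Proof. rewrite /qint mulrC divfK ?qq1_neq0 //. by rewrite addrC subrK. Qed.

Lemma qint_inj m n : qint m = qint n -> m = n.
Proof. by move=> h; apply: qqX_inj; rewrite -!qint_pow h. Qed.

Lemma poly_inf_eq (p r : {poly Qq}) : (forall n, p.[qint n] = r.[qint n]) -> p = r.
Proof.
move=> h; apply/eqP; rewrite -subr_eq0; apply/negPn/negP => nz.
have := @max_poly_roots _ _ (map qint (iota 0 (size (p - r)))) nz.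
rewrite size_map size_iota ltnn => H; suff: false by []; apply: H.
- by apply/allP => y /mapP [n _ ->]; rewrite /root hornerD hornerN h subrr.
- by rewrite map_inj_uniq ?iota_uniq //; apply: qint_inj.
Qed.

Lemma Epoly_eq a (p : {poly Qq}) : (forall n, p.[qint n] = Esum a n) -> Epoly a = p.
Proof.
move=> hp; have := @epsilon_spec {poly Qq} (inhabits 0)
  (fun p : {poly Qq} => forall n : nat, p.[qint n] = Esum a n) (ex_intro _ p hp).
rewrite -/(Epoly a) => he; apply: poly_inf_eq => n; by rewrite he hp.
Qed.



Definition Vs (c : nat -> Qq) N j := \sum_(e < N) c e * qq^-1 ^+ (e * j).
Definition Ss (c : nat -> Qq) N n := \sum_(e < N) c e * qq ^+ (e * n).

Lemma Fsum0 a : Fsum a 0 = 1.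
Proof. by elim: a => [|x a IH] //=; rewrite big_ord1 muln0 expr0 mul1r IH. Qed.

Lemma FsumS x a n : Fsum (x :: a) n.+1 = Fsum a n.+1 + qq ^+ x * Fsum (x :: a) n.
Proof.
rewrite /= big_ord_recl /= muln0 expr0 mul1r subn0; congr (_ + _).
rewrite mulr_sumr; apply: eq_bigr => j _.
by rewrite subSS mulnS exprD mulrA.
Qed.

Lemma sum_ind N x (F : nat -> Qq) : (x < N)%N -> \sum_(e < N) ((e : nat) == x)%:R * F e = F x.
Proof.
move=> xN; rewrite (bigD1 (Ordinal xN)) //= eqxx mul1r big1 ?addr0 // => i ne.
suff /negbTE -> : (i : nat) != x by rewrite mul0r.
by apply: contra ne => /eqP e; apply/eqP/val_inj.
Qed.

Lemma Vs0 c N : Vs c N 0 = Ss c N 0.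
Proof. by apply: eq_bigr => e _; rewrite muln0 !expr0. Qed.

Lemma claim a : a != [::] -> uniq a -> forall N, (forall e, e \in a -> e < N)%N ->
 exists c : nat -> Qq,
 [/\ forall e, e \notin a -> c e = 0,
     forall n, Fsum a n = Ss c N n,
     forall j, (0 < j < size a)%N -> Vs c N j = 0 &
     Vs c N (size a) = (-1) ^+ (size a).-1 * qq^-1 ^+ (sumn a)].
Proof.
elim: a => [//|x a IH] _ /= /andP [xa ua] N hN.
have xN : (x < N)%N by apply: hN; rewrite mem_head.
have [a0|ne] := eqVneq a [::].
  subst a; exists (fun e => (e == x)%:R); split.
  - by move=> e; rewrite mem_seq1 => /negbTE ->.
  - move=> n; rewrite /Ss (sum_ind (fun e => qq ^+ (e * n))) //= big_ord_recr /= subnn /= mulr1 big1 ?add0r // => j _.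
    by rewrite subn_eq0 leqNgt ltn_ord /= mulr0.
  - by case=> [|[]].
  - by rewrite /Vs (sum_ind (fun e => qq^-1 ^+ (e * 1))) //= expr0 mul1r addn0 muln1.
have [|c [c0 cF cV cVk]] := IH ne ua N.
  by move=> e ea; apply: hN; rewrite in_cons ea orbT.
pose d e := qq ^+ e - qq ^+ x.
have dnz e : e != x -> d e != 0.
  by move=> ne'; rewrite subr_eq0; apply: contra ne' => /eqP /qqX_inj ->.
pose c0' e := if e == x then 0 else c e * qq ^+ e / d e.
pose K := 1 - \sum_(e < N) c0' e.
pose c' e := c0' e + (e == x)%:R * K.
have key e : c' e * d e = c e * qq ^+ e.
  rewrite /c' /c0'; have [->|nex] := eqVneq e x.
    by rewrite /d subrr !mulr0 c0 ?mul0r.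
  by rewrite mul0r addr0 divfK ?dnz.
have sum1 : Ss c' N 0 = 1.
  rewrite /Ss; under eq_bigr => e _ do rewrite muln0 expr0 mulr1.
  by rewrite big_split /= (sum_ind (fun _ => K)) // /K addrC subrK.
have F' n : Fsum (x :: a) n = Ss c' N n.
  elim: n => [|n IHn]; first by rewrite Fsum0 sum1.
  rewrite FsumS IHn cF /Ss mulr_sumr -big_split /=; apply: eq_bigr => e _.
  have := key e; rewrite /d => ke.
  rewrite mulnS exprD !mulrA -ke; ring.
have Vrec j : qq ^+ x * Vs c' N j.+1 = Vs c' N j - Vs c N j.
  rewrite /Vs mulr_sumr -sumrB; apply: eq_bigr => e _.
  have -> : qq^-1 ^+ (e * j) = qq ^+ e * qq^-1 ^+ (e * j.+1).
    by rewrite mulnS exprD mulrA -exprMn mulfV ?qq_neq0 // expr1n mul1r.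
  have := key e; rewrite /d => ke.
  rewrite (mulrA (c e)) -ke; ring.
have V0 : Vs c' N 1 = 0.
  apply: (mulfI (qqX_neq0 x)); rewrite mulr0.
  by rewrite Vrec !Vs0 sum1 -cF Fsum0 subrr.
have Vz j : (0 < j <= size a)%N -> Vs c' N j = 0.
  elim: j => [//|j IHj] /andP [_ ja].
  case: j IHj ja => [|j] IHj ja; first exact: V0.
  apply: (mulfI (qqX_neq0 x)); rewrite mulr0.
  by rewrite Vrec IHj ?(ltnW ja) // cV ?ja // subrr.
exists c'; split.
- move=> e; rewrite in_cons negb_or => /andP [nex nea].
  by rewrite /c' /c0' (negbTE nex) c0 // !mul0r /= addr0.
- exact: F'.
- by move=> j /andP [j0 ja]; apply: Vz; rewrite j0 -ltnS.
- apply: (mulfI (qqX_neq0 x)); rewrite Vrec Vz ?cVk; last first.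
    by case: (a) ne => //= *; rewrite ltnS leqnn.
  case: (a) ne => [//|y a'] _ /=.
  have hx : qq ^+ x * qq^-1 ^+ x = 1 by rewrite -exprMn mulfV ?qq_neq0 // expr1n.
  rewrite exprS !exprD.
  rewrite [RHS](_ : _ = (qq ^+ x * qq^-1 ^+ x) * (-1 * (-1) ^+ size a' * (qq^-1 ^+ y * qq^-1 ^+ sumn a'))); last by ring.
  rewrite hx; ring.
Qed.



Lemma mem_leq_sumn (s : seq nat) e : e \in s -> (e <= sumn s)%N.
Proof.
elim: s => [//|y s IH]; rewrite in_cons /= => /orP [/eqP ->|/IH]; first exact: leq_addr.
by move=> h; apply: (leq_trans h); apply: leq_addl.
Qed.

Lemma height_lt d (P : finPOrderType d) (h : P -> nat) :
  is_height h -> forall x y : P, (x < y)%O -> (h x < h y)%N.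
Proof.
move=> hh.
suff H n : forall x y : P, (#|[set z | (x < z)%O && (z < y)%O]| < n)%N -> (x < y)%O -> (h x < h y)%N.
  by move=> x y; apply: (H _ x y (ltnSn _)).
elim: n => [//|n IH] x y cn xy.
have [cv|ncv] := boolP (covers x y); first exact: hh.
move: ncv; rewrite /covers xy /= => /forallPn [z]; rewrite negbK => /andP [xz zy].
apply: (@ltn_trans (h z)).
  apply: (IH _ _ _ xz); rewrite -ltnS (leq_trans _ cn) // ltnS; apply: proper_card.
  apply/properP; split.
    by apply/subsetP => u; rewrite !inE => /andP [-> /= uz]; apply: lt_trans uz zy.
  by exists z; rewrite !inE ?ltxx ?andbT ?andbF //; apply/andP; split; [exact: xz|exact: zy].
apply: (IH _ _ _ zy); rewrite -ltnS (leq_trans _ cn) // ltnS; apply: proper_card.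
apply/properP; split.
  by apply/subsetP => u; rewrite !inE => /andP [zu ->]; rewrite (lt_trans xz zu).
by exists z; rewrite !inE ?ltxx ?andbT ?andbF //; apply/andP; split; [exact: xz|exact: zy].
Qed.

Lemma qint_mul n : (qq - 1) * qint n = qq ^+ n - 1.
Proof. by rewrite /qint mulrC divfK ?qq1_neq0. Qed.

Lemma eval_pt k : 1 + (qq - 1) * ((qint 1 - qint k.+1) * (qq ^+ k.+1)^-1) = qq^-1 ^+ k.
Proof.
rewrite mulrA mulrBr !qint_mul exprVn (exprS qq k) expr1.
have t0 := qqX_neq0 k; have q0 := qq_neq0.
move: (qq ^+ k) t0 => t t0.
rewrite opprB addrA subrK -[X in X - _](mulr1 qq) -mulrBr.
by rewrite invfM mulrACA mulfV // mul1r mulrBl mul1r mulfV // addrC subrK.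
Qed.

Definition Ypoly : {poly Qq} := 1 + (qq - 1)%:P * 'X.

Lemma term_val (s : seq nat) k : s != [::] -> uniq s -> size s = k ->
  qq ^+ (sumn s) * (Epoly s \Po (('X - (qint k.+1)%:P) * ((qq ^+ k.+1)^-1)%:P)).[qint 1]
  = (-1) ^+ k.-1.
Proof.
move=> ne us sk.
have [c [_ cF _ cV]] := claim ne us (N := (sumn s).+1) (fun e es => mem_leq_sumn es).
pose Pc := \sum_(e < (sumn s).+1) (c e)%:P * Ypoly ^+ e.
have Pce y : Pc.[y] = \sum_(e < (sumn s).+1) c e * (1 + (qq - 1) * y) ^+ e.
  rewrite /Pc horner_sum; apply: eq_bigr => e _.
  by rewrite hornerCM horner_exp /Ypoly hornerD hornerC hornerCM hornerX.
have -> : Epoly s = Pc.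
  apply: Epoly_eq => n; rewrite Pce qint_pow Esum_F cF /Ss; apply: eq_bigr => e _.
  by rewrite -exprM mulnC.
rewrite horner_comp hornerM hornerXsubC !hornerC Pce eval_pt.
have -> : \sum_(e < (sumn s).+1) c e * (qq^-1 ^+ k) ^+ e = Vs c (sumn s).+1 (size s).
  by rewrite /Vs sk; apply: eq_bigr => e _; rewrite -exprM mulnC.
by rewrite cV sk mulrCA -exprMn mulfV ?qq_neq0 // expr1n mulr1.
Qed.



Lemma tele (A : nat -> int) N :
  \sum_(1 <= k < N.+1) (-1) ^+ k.-1 * (A k + A k.-1) = A 0%N - (-1) ^+ N * A N.
Proof.
elim: N => [|N IH]; first by rewrite big_geq // expr0 mul1r subrr.
rewrite big_nat_recr //= IH exprS; ring.
Qed.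

Section ChiR.
Variables (T : finType) (r : rel T).
Hypotheses (rt : transitive r) (ri : irreflexive r).
Variable m : T.
Hypothesis hm : forall x, x != m -> r m x.

Definition ChR k : {set k.-tuple T} := [set c : k.-tuple T | sorted r c].
Definition Am k : {set k.-tuple T} := ChR k :\: [set c : k.-tuple T | m \in c].

Lemma ChR_split k : #|ChR k.+1| = (#|Am k.+1| + #|Am k|)%N.
Proof.
rewrite -(cardsID [set c : k.+1.-tuple T | m \in c] (ChR k.+1)) addnC; congr addn.
have inj : injective (fun c : k.-tuple T => cons_tuple m c).
  by move=> c1 c2 /(congr1 (fun t => behead (val t))) /= e; apply: val_inj.
rewrite -(card_imset (Am k) inj); apply: eq_card => c.
apply/idP/imsetP.
  case/tupleP: c => x c; rewrite !inE /= => /andP [srt mc].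
  move: srt; rewrite (path_sortedE rt) => /andP [/allP ax sc].
  have : m \in x :: c by []. clear mc. rewrite in_cons => /orP [/eqP mx|mc].
    subst x; exists c; last by apply: val_inj.
    rewrite !inE sc andbT; apply/negP => /ax; by rewrite ri.
  exfalso; have [xm|xm] := eqVneq x m.
    by subst x; have := ax _ mc; rewrite ri.
  by have := rt (hm xm) (ax _ mc); rewrite ri.
move=> [c' ]; rewrite !inE => /andP [mc' sc'] ->.
rewrite /= in_cons eqxx andbT (path_sortedE rt) sc' andbT.
by apply/allP => y yc; apply: hm; apply: contra mc' => /eqP <-.
Qed.

Lemma Am0 : #|Am 0| = 1%N.
Proof.
have -> : Am 0 = setT by apply/setP => c; rewrite !inE tuple0.
by rewrite cardsT card_tuple.
Qed.

Lemma AmN : #|Am #|T| | = 0%N.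
Proof.
apply/eqP; rewrite cards_eq0; apply/eqP/setP => c; rewrite !inE.
apply/negP => /andP [mc sc].
have uc := sorted_uniq rt ri sc.
have H : (size c <= size (enum (predC1 m)))%N.
  apply: uniq_leq_size uc _ => y yc.
  by rewrite mem_enum /=; apply/eqP => ym; move: yc; rewrite ym (negbTE mc).
rewrite size_tuple -cardE cardC1 in H.
have pos : (0 < #|T|)%N by apply/card_gt0P; exists m.
by rewrite leqNgt ltn_predL pos in H.
Qed.

Lemma chiR : \sum_(1 <= k < #|T|.+1) (-1) ^+ k.-1 * (#|ChR k|%:Z) = 1.
Proof.
rewrite (eq_big_nat _ _ (F2 := fun k => (-1) ^+ k.-1 * ((#|Am k|)%:Z + (#|Am k.-1|)%:Z))).
  by rewrite tele Am0 AmN mulr0 subr0.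
by case=> [//|k] _; rewrite ChR_split PoszD.
Qed.

End ChiR.



Theorem mainTheorem12 (d : Order.disp_t) (P : finPOrderType d) (h : P -> nat) :
  is_height h ->
  (Zq h).[qint 1] = (@chi d P)%:~R /\
  ((exists m : P, forall x : P, (m <= x)%O) \/ (exists M : P, forall x : P, (x <= M)%O) ->
     (Zq h).[qint 1] = 1).
Proof.
move=> hh.
have main : (Zq h).[qint 1] = (@chi d P)%:~R.
  rewrite /Zq /chi horner_sum rmorph_sum; apply: eq_big_nat => k /andP [k1 _].
  rewrite horner_sum.
  rewrite (eq_bigr (fun _ => (-1) ^+ k.-1)); last first.
    move=> c; rewrite inE => sc.
    have us : uniq (map h c).
      apply: (sorted_uniq (@ltn_trans) (@ltnn)).
      by apply: (homo_sorted (height_lt hh)).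
    have sz : size (map h c) = k by rewrite size_map size_tuple.
    have ne : map h c != [::] by rewrite -size_eq0 sz -lt0n.
    rewrite hornerCM -(term_val ne us sz); congr (qq ^+ _ * _).
    by rewrite sumnE big_map.
  rewrite sumr_const rmorphM rmorphXn rmorphN1 -mulr_natr.
  by [].
split=> // hyp; rewrite main.
suff -> : @chi d P = 1 by [].
case: hyp => [[m hm]|[M hM]].
  apply: (@chiR P (fun x y : P => (x < y)%O) (@lt_trans _ _) (@ltxx _ _) m).
  by move=> x xm; rewrite lt_neqAle eq_sym xm hm.
rewrite /chi.
rewrite (eq_big_nat _ _ (F2 := fun k => (-1) ^+ k.-1 * (#|ChR (fun x y : P => (y < x)%O) k|)%:Z)).
  apply: chiR (M) _.
  - by move=> y x z xy yz; apply: lt_trans yz xy.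
  - by move=> x; apply: ltxx.
  - by move=> x xM; rewrite lt_neqAle xM hM.
move=> k _; congr (_ * (Posz _)).
have inj : injective (@rev_tuple k P).
  by move=> t1 t2 /(congr1 val) /= /(congr1 rev); rewrite !revK => e; apply: val_inj.
rewrite -(card_imset (Ch k) inj); apply: eq_card => c.
apply/imsetP/idP.
  by move=> [c' ]; rewrite !inE => sc ->; rewrite /= rev_sorted.
rewrite inE => sc; exists (rev_tuple c); last by apply: val_inj; rewrite /= revK.
by rewrite inE /= rev_sorted.
Qed.
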